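(* If $T$ and $T'$ are proper caterpillars with $\Phi(T)=\Phi(T')$, then $T$ and $T'$ are isomorphic. In other words, the map $\Phi$ from (isomorphism classes of) proper caterpillars to reverse-classes of integer compositions is one-to-one.
   Context: A composition is a finite nonempty sequence $\beta=\beta_1\beta_2\cdots\beta_k$ of positive integers; its reverse is $\beta_k\cdots\beta_2\beta_1$, and its reverse-class is $[\beta]^*=\{\beta,\text{reverse of }\beta\}$. A caterpillar is a tree in which the subgraph induced by the internal (non-leaf) vertices is a non-trivial path (the spine); it is proper if every internal vertex is adjacent to at least one leaf. For a proper caterpillar $T$ with spine $v_1v_2\cdots v_k$ (consecutive vertices adjacent), let $L(T)$ be the set of edges not on the spine and let $\beta_i$ be the number of vertices of the connected component of $(V(T),L(T))$ containing $v_i$ (i.e. $1$ plus the number of leaves adjacent to $v_i$). Define $\Phi(T)=[\beta_1\beta_2\cdots\beta_k]^*$. *)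

(* Defs.v *)
From mathcomp Require Import all_boot.
Set Implicit Arguments. Unset Strict Implicit. Unset Printing Implicit Defensive.

Section Caterpillar.
Variables (T : finType) (e : rel T).

Definition simple_graph : Prop := symmetric e /\ irreflexive e.

Definition connected : Prop := forall x y : T, connect e x y.

Definition acyclic : Prop :=
  forall (x : T) (p : seq T),
    path e x p -> uniq (x :: p) -> 2 <= size p -> ~~ e (last x p) x.

Definition is_tree : Prop := simple_graph /\ connected /\ acyclic.

Definition degree (v : T) : nat := #|[set w | e v w]|.
Definition leaf (v : T) : bool := degree v == 1.
Definition internal (v : T) : bool := ~~ leaf v.

(* s = v_1 ... v_k is a spine: the subgraph induced by the internal
   vertices is the (non-empty) path v_1 v_2 ... v_k, i.e. the internal
   vertices are exactly the (distinct) v_i, and v_i, v_j are adjacent iff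
   |i - j| = 1. *)
Definition is_spine (s : seq T) : Prop :=
  [/\ s != [::], uniq s, (forall v, (v \in s) = internal v) &
      (forall (x0 : T) (i j : nat), i < size s -> j < size s ->
         e (nth x0 s i) (nth x0 s j) = (i.+1 == j) || (j.+1 == i))].

Definition is_caterpillar : Prop := is_tree /\ exists s, is_spine s.

Definition is_proper_caterpillar : Prop :=
  is_caterpillar /\ forall v, internal v -> exists2 w, e v w & leaf w.

Definition spine_edge (s : seq T) (x y : T) : bool :=
  ((x, y) \in zip s (behead s)) || ((y, x) \in zip s (behead s)).

Definition nonspine_rel (s : seq T) : rel T :=
  fun x y => e x y && ~~ spine_edge s x y.

Definition spine_composition (s : seq T) : seq nat :=
  map (fun v => #|[set w | connect (nonspine_rel s) v w]|) s.
End Caterpillar.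

Definition revclass (b : seq nat) : pred (seq nat) :=
  fun c => (c == b) || (c == rev b).

Definition graph_iso (T T' : finType) (e : rel T) (e' : rel T') : Prop :=
  exists f : T -> T', bijective f /\ forall x y, e' (f x) (f y) = e x y.

(* Main.v *)
Require Import Defs.
From mathcomp Require Import all_boot.
From mathcomp Require Import zify.
Set Implicit Arguments. Unset Strict Implicit. Unset Printing Implicit Defensive.

Lemma mem_zip2 (A B : eqType) (s : seq A) (t : seq B) a b :
  (a, b) \in zip s t -> (a \in s) && (b \in t).
Proof.
elim: s t => [|x s IH] [|y t] //=.
rewrite inE => /orP[/eqP [-> ->]|/IH /andP[h1 h2]].
  by rewrite !inE !eqxx.
by rewrite !inE h1 h2 !orbT.
Qed.

Lemma zip_nth (T : eqType) (x0 : T) s i : i.+1 < size s ->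
  (nth x0 s i, nth x0 s i.+1) \in zip s (behead s).
Proof.
elim: s i => // a [|b r] IH [|i] //= H; first by rewrite mem_head.
by rewrite inE IH ?orbT.
Qed.

Lemma conn_stay (T : finType) (e : rel T) (P : T -> Prop) x y :
  (forall z w, e z w -> P z -> P w) -> connect e x y -> P x -> P y.
Proof.
move=> H /connectP[p ep ->]; elim: p x ep => //= z p IH x /andP[exz ep] ax.
exact: IH ep (H _ _ exz ax).
Qed.

Definition Lv (T : finType) (e : rel T) (s : seq T) (v : T) :=
  [seq w <- enum T | e v w && (w \notin s)].

Definition Dseq (T : finType) (e : rel T) (s : seq T) :=
  map (fun v => size (Lv e s v)) s.

Definition code (T : finType) (e : rel T) (s : seq T) (x : T) :=
  if x \in s then (index x s, 0)
  else (find (e x) s, (index x (Lv e s (nth x s (find (e x) s)))).+1).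

Definition Rc (a b : nat * nat) : bool :=
  ((a.2 == 0) && (b.2 == 0) && ((a.1.+1 == b.1) || (b.1.+1 == a.1)))
  || ((a.1 == b.1) && ((a.2 == 0) != (b.2 == 0))).

Section Cat.
Variables (T : finType) (e : rel T) (s : seq T).
Hypotheses (sym : symmetric e) (conn : connected e) (sp : is_spine e s).

Lemma mem_Lv v w : (w \in Lv e s v) = e v w && (w \notin s).
Proof. by rewrite mem_filter mem_enum andbT. Qed.

Lemma uniq_Lv v : uniq (Lv e s v).
Proof. by rewrite filter_uniq ?enum_uniq. Qed.

Lemma notin_leaf x : x \notin s -> leaf e x.
Proof. by case: sp => _ _ hm _; rewrite hm /internal negbK. Qed.

Lemma leaf_set x : leaf e x -> exists u, forall w, e x w = (w == u).
Proof.
rewrite /leaf /degree => /cards1P[u Hu]; exists u => w.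
by rewrite -in_set1 -Hu inE.
Qed.

Lemma some_s : exists v, v \in s.
Proof. by case: sp; case: (s) => // v r _ _ _ _; exists v; rewrite mem_head. Qed.

Lemma nbr x : x \notin s -> exists2 u, u \in s & forall w, e x w = (w == u).
Proof.
move=> xs; have [u Hu] := leaf_set (notin_leaf xs); exists u => //.
apply/negPn/negP => us; have [u' Hu'] := leaf_set (notin_leaf us).
have eux : e u x by rewrite sym Hu.
rewrite Hu' in eux; move/eqP: eux => ?; subst u'.
have [v vs] := some_s.
have : v = x \/ v = u.
  apply: (conn_stay (P := fun z => z = x \/ z = u)) (conn x v) _; last by left.
  move=> z w ezw [?|?]; subst z.
    by rewrite Hu in ezw; move/eqP: ezw => ->; right.
  by rewrite Hu' in ezw; move/eqP: ezw => ->; left.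
by case=> ?; subst v; [rewrite vs in xs | rewrite vs in us].
Qed.

Lemma code_out x u : x \notin s -> u \in s -> (forall w, e x w = (w == u)) ->
  code e s x = (index u s, (index x (Lv e s u)).+1).
Proof.
rewrite /code => /negbTE -> us H.
have -> : find (e x) s = index u s.
  by rewrite /index; apply: eq_find => w; rewrite H.
by rewrite nth_index.
Qed.

Lemma code_in x : x \in s -> code e s x = (index x s, 0).
Proof. by rewrite /code => ->. Qed.

Lemma code_inj : injective (code e s).
Proof.
move=> x y.
case xs: (x \in s); case ys: (y \in s).
- by rewrite !code_in // => -[]; apply: (index_inj x).
- have [u us Hu] := nbr (negbT ys).
  by rewrite (code_in xs) (code_out (negbT ys) us Hu).
- have [u us Hu] := nbr (negbT xs).
  by rewrite (code_in ys) (code_out (negbT xs) us Hu).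
have [u us Hu] := nbr (negbT xs).
have [u' us' Hu'] := nbr (negbT ys).
rewrite (code_out (negbT xs) us Hu) (code_out (negbT ys) us' Hu').
case=> hi hj; have ? : u = u' by exact: (index_inj u us us' hi).
subst u'.
apply: (index_inj x (s := Lv e s u)) => //.
  by rewrite mem_Lv sym Hu eqxx xs.
by rewrite mem_Lv sym Hu' eqxx ys.
Qed.

Lemma index_eq x y : x \in s -> y \in s -> (x == y) = (index x s == index y s).
Proof.
move=> xs ys; apply/eqP/eqP => [->//|]; exact: (index_inj x).
Qed.

Lemma code_adj x y : e x y = Rc (code e s x) (code e s y).
Proof.
case: sp => _ us _ hadj.
case xs: (x \in s); case ys: (y \in s).
- rewrite !code_in // /Rc /= andbF orbF.
  by rewrite -{1}(nth_index x xs) -{1}(nth_index x ys) hadj ?index_mem.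
- have [u vs Hu] := nbr (negbT ys).
  rewrite (code_in xs) (code_out (negbT ys) vs Hu) /Rc /= andbT.
  by rewrite sym Hu index_eq.
- have [u vs Hu] := nbr (negbT xs).
  rewrite (code_in ys) (code_out (negbT xs) vs Hu) /Rc /= andbT /=.
  by rewrite Hu index_eq // eq_sym.
have [u vs Hu] := nbr (negbT xs).
have [u' vs' Hu'] := nbr (negbT ys).
rewrite (code_out (negbT xs) vs Hu) (code_out (negbT ys) vs' Hu') /Rc /= andbF.
rewrite Hu; apply/negbTE/negP => /eqP ?; subst y.
by rewrite vs in ys.
Qed.

Lemma code_image i j :
  (exists x, code e s x = (i, j)) <-> (i < size s) /\ (j <= nth 0 (Dseq e s) i).
Proof.
case: sp => _ us _ _.
split.
  case=> x; case xs: (x \in s).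
    rewrite code_in // => -[<- <-]; split => //; by rewrite index_mem.
  have [u vs Hu] := nbr (negbT xs).
  rewrite (code_out (negbT xs) vs Hu) => -[<- <-].
  have ilt : index u s < size s by rewrite index_mem.
  split => //; rewrite /Dseq (nth_map u) // nth_index //.
  by rewrite index_mem mem_Lv sym Hu eqxx xs.
case=> ilt.
have [v0 _] := some_s.
rewrite /Dseq (nth_map v0) //.
set u := nth v0 s i.
have usi : u \in s by exact: mem_nth.
case: j => [|m] jlt.
  exists u; rewrite code_in //; congr pair; exact: index_uniq.
set x := nth v0 (Lv e s u) m.
have : x \in Lv e s u by exact: mem_nth.
rewrite mem_Lv => /andP[eux xs].
have [u' vs' Hu'] := nbr xs.
have ? : u = u' by apply/eqP; rewrite -Hu' sym.
subst u'.
exists x; rewrite (code_out xs vs' Hu'); congr pair.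
  exact: index_uniq.
by rewrite index_uniq // uniq_Lv.
Qed.

Lemma spine_edge_in x y : spine_edge s x y -> (x \in s) && (y \in s).
Proof.
rewrite /spine_edge => /orP[] /mem_zip2 /andP[h1 /mem_behead h2].
  by rewrite h1 h2.
by rewrite h1 h2.
Qed.

Lemma spine_edge_of x y : x \in s -> y \in s -> e x y -> spine_edge s x y.
Proof.
case: sp => _ us _ hadj xs ys.
rewrite -(nth_index x xs) -(nth_index x ys) hadj ?index_mem //.
move=> /orP[] /eqP H; rewrite /spine_edge.
  by rewrite -H zip_nth // H index_mem.
by rewrite -H zip_nth ?orbT // H index_mem.
Qed.

Lemma comp_v v : v \in s ->
  #|[set w | connect (nonspine_rel e s) v w]| = (size (Lv e s v)).+1.
Proof.
move=> vs.
have -> : #|[set w | connect (nonspine_rel e s) v w]| = #|v :: Lv e s v|.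
  apply: eq_card => w; rewrite inE; apply/idP/idP.
    move=> hc; apply: (conn_stay (P := fun z => z \in v :: Lv e s v) _ hc); last by rewrite mem_head.
    move=> z w' /andP[ezw nse]; rewrite !inE => /orP[/eqP ?|].
      subst z; case ws: (w' \in s).
        by rewrite (spine_edge_of vs ws ezw) in nse.
      by rewrite mem_Lv ezw /= ws orbT.
    rewrite mem_Lv => /andP[evz zs].
    have [u _ Hu] := nbr zs.
    rewrite sym Hu in evz; rewrite Hu in ezw.
    by rewrite (eqP ezw) -(eqP evz) eqxx.
  rewrite inE => /orP[/eqP ->|]; first exact: connect0.
  rewrite mem_Lv => /andP[evw ws]; apply: connect1.
  rewrite /nonspine_rel evw /=; apply/negP => /spine_edge_in /andP[_ h].
  by rewrite h in ws.
apply/card_uniqP; rewrite /= uniq_Lv andbT mem_Lv; apply/negP => /andP[_].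
by rewrite vs.
Qed.

Lemma comp_D : spine_composition e s = map succn (Dseq e s).
Proof.
rewrite /spine_composition /Dseq -map_comp; apply/eq_in_map => v vs /=.
exact: comp_v.
Qed.

End Cat.

Lemma rev_spine (T : finType) (e : rel T) (s : seq T) :
  is_spine e s -> is_spine e (rev s).
Proof.
case=> sn us hm hadj; split.
- by rewrite -size_eq0 size_rev size_eq0.
- by rewrite rev_uniq.
- by move=> v; rewrite mem_rev.
move=> x0 i j; rewrite size_rev => il jl.
rewrite !nth_rev // hadj; lia.
Qed.

Lemma Dseq_rev (T : finType) (e : rel T) (s : seq T) :
  Dseq e (rev s) = rev (Dseq e s).
Proof.
rewrite /Dseq map_rev; congr rev; apply: eq_map => v.
by congr size; apply: eq_filter => w; rewrite mem_rev.
Qed.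

Lemma iso_of_D (T T' : finType) (e : rel T) (e' : rel T') (s : seq T) (s' : seq T') :
  symmetric e -> connected e -> is_spine e s ->
  symmetric e' -> connected e' -> is_spine e' s' ->
  Dseq e s = Dseq e' s' -> graph_iso e e'.
Proof.
move=> sym conn sp sym' conn' sp' HD.
have hsz : size s = size s' by rewrite -(size_map (fun v => size (Lv e s v))) -(size_map (fun v => size (Lv e' s' v)) s') -/(Dseq _ _) HD.
have ex1 : forall x, exists y, code e' s' y = code e s x.
  move=> x; case E: (code e s x) => [i j].
  have [h1 h2] : (i < size s) /\ (j <= nth 0 (Dseq e s) i) by apply/(code_image sym conn sp); exists x.
  by apply/(code_image sym' conn' sp'); rewrite -hsz -HD.
have ex2 : forall y, exists x, code e s x = code e' s' y.
  move=> y; case E: (code e' s' y) => [i j].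
  have [h1 h2] : (i < size s') /\ (j <= nth 0 (Dseq e' s') i) by apply/(code_image sym' conn' sp'); exists y.
  by apply/(code_image sym conn sp); rewrite hsz HD.
have [y0 _] := some_s sp'.
have [x0 _] := some_s sp.
pose f x := odflt y0 [pick y | code e' s' y == code e s x].
pose g y := odflt x0 [pick x | code e s x == code e' s' y].
have hf : forall x, code e' s' (f x) = code e s x.
  move=> x; rewrite /f; case: pickP => [y /eqP //|H].
  by have [y Hy] := ex1 x; move: (H y); rewrite Hy eqxx.
have hg : forall y, code e s (g y) = code e' s' y.
  move=> y; rewrite /g; case: pickP => [x /eqP //|H].
  by have [x Hx] := ex2 y; move: (H x); rewrite Hx eqxx.
exists f; split.
  exists g => [x|y].
    by apply: (code_inj sym conn sp); rewrite hg hf.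
  by apply: (code_inj sym' conn' sp'); rewrite hf hg.
by move=> x y; rewrite (code_adj sym conn sp) (code_adj sym' conn' sp') !hf.
Qed.

Theorem lemma2p2 (T T' : finType) (e : rel T) (e' : rel T')
  (s : seq T) (s' : seq T') :
  is_proper_caterpillar e -> is_proper_caterpillar e' ->
  is_spine e s -> is_spine e' s' ->
  revclass (spine_composition e s) =i revclass (spine_composition e' s') ->
  graph_iso e e'.
Proof.
move=> [[[[sym _] [conn _]] _] _] [[[[sym' _] [conn' _]] _] _] sp sp' H.
have := H (spine_composition e s).
rewrite /revclass -!topredE /= eqxx /= => /esym.
rewrite (comp_D sym conn sp) (comp_D sym' conn' sp').
case/orP => /eqP.
  move/(inj_map succn_inj) => HD.
  exact: (iso_of_D sym conn sp sym' conn' sp' HD).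
rewrite -map_rev -Dseq_rev => /(inj_map succn_inj) HD.
exact: (iso_of_D sym conn sp sym' conn' (rev_spine sp') HD).
Qed.
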